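(* Let $f\in\mathbb Z[x,x^{-1}]$ be a Laurent polynomial with integer coefficients which is hyperbolic (no complex root on the unit circle). Then $f\cdot\mathbb Z_{ac}(x)\cap\mathbb Z_{ac}[x)=f\cdot\mathbb Z_{ac}[x)$.
   Context: A formal Laurent series $\sum_{n\in\mathbb Z}c_nx^n$ is almost convergent if $\limsup_{n\to\infty}|c_n|^{1/n}\le1$ and $\limsup_{n\to\infty}|c_{-n}|^{1/n}\le1$. $\mathbb Z_{ac}(x)$ denotes the ring (under formal multiplication where defined; here products with Laurent polynomials) of almost convergent two-sided Laurent series with integer coefficients, and $\mathbb Z_{ac}[x)$ the subset of those of the form $\sum_{n\ge m}a_nx^n$ for some $m\in\mathbb Z$ (only finitely many negative powers). *)

(* Defs.v *)
From HB Require Import structures.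
From mathcomp Require Import all_boot all_order all_algebra all_field.
Set Implicit Arguments. Unset Strict Implicit. Unset Printing Implicit Defensive.
Import Order.TTheory GRing.Theory Num.Theory.
Local Open Scope ring_scope.

(* A Laurent polynomial f = x^(lsh f) * (lp f)(x) with integer coefficients. *)
Record laurent := Laurent { lp : {poly int}; lsh : int }.

Definition lcoef (f : laurent) (k : int) : int :=
  match k - lsh f with Posz i => (lp f)`_i | Negz _ => 0 end.

Definition leval (f : laurent) (z : algC) : algC :=
  z ^ (lsh f) * (map_poly intr (lp f)).[z].

Definition hyperbolic (f : laurent) : Prop :=
  forall z : algC, `|z| = 1 -> leval f z != 0.

(* Two-sided formal Laurent series with integer coefficients: c n = coefficient of x^n. *)
Definition series := int -> int.

Definition lmul (f : laurent) (c : series) : series :=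
  fun n => \sum_(i < size (lp f)) (lp f)`_i * c (n - lsh f - i%:Z).

(* limsup_{n -> oo} |a_n|^(1/n) <= 1, written out with rational epsilons. *)
Definition limsup_root_le1 (a : nat -> int) : Prop :=
  forall e : rat, 0 < e ->
    exists N : nat, forall n : nat, (N <= n)%N -> (`|a n|)%:~R <= (1 + e) ^+ n.

Definition almost_convergent (c : series) : Prop :=
  limsup_root_le1 (fun n => c n%:Z) /\ limsup_root_le1 (fun n => c (- n%:Z)).

Definition Zac_half (c : series) : Prop :=
  almost_convergent c /\ exists m : int, forall n : int, n < m -> c n = 0.

(* Main.v *)
Require Import Defs.
From HB Require Import structures.
From mathcomp Require Import all_boot all_order all_algebra all_field.
From mathcomp Require Import ring lra zify.
Import Order.TTheory GRing.Theory Num.Theory.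
Local Open Scope ring_scope.
Set Implicit Arguments. Unset Strict Implicit. Unset Printing Implicit Defensive.


Lemma bern (R : numDomainType) (h : R) m : 0 <= h -> 1 + h *+ m <= (1 + h) ^+ m.
Proof.
move=> h0; elim: m => [|m IH]; first by rewrite mulr0n addr0 expr0.
rewrite exprS.
apply: le_trans (_ : (1 + h) * (1 + h *+ m) <= _); last first.
  by rewrite ler_wpM2l // addr_ge0.
rewrite -subr_ge0.
have -> : (1 + h) * (1 + h *+ m) - (1 + h *+ m.+1) = h * (h *+ m) by rewrite mulrSr; ring.
by rewrite mulr_ge0 // mulrn_wge0.
Qed.

Lemma grow (x t K : algC) : 1 < t -> 0 < x -> 0 <= K -> exists m, K < x * t ^+ m.
Proof.
move=> t1 x0 K0.
set h := t - 1.
have h0 : 0 < h by rewrite subr_gt0.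
have xh0 : 0 < x * h by rewrite mulr_gt0.
have y0 : 0 <= K / (x * h) by rewrite divr_ge0 // ltW.
have /andP[_ Hm] := truncn_itv y0.
exists (Num.truncn (K / (x * h))).+1.
set m := (Num.truncn _).+1 in Hm *.
rewrite ltr_pdivrMr // in Hm.
apply: lt_le_trans Hm _.
have -> : t = 1 + h by rewrite /h; ring.
apply: le_trans (_ : x * (1 + h *+ m) <= _); last by apply: ler_wpM2l; [exact: ltW | apply: bern; exact: ltW].
rewrite -subr_ge0.
have -> : x * (1 + h *+ m) - m%:R * (x * h) = x by rewrite -mulr_natl; ring.
exact: ltW.
Qed.


Definition subexp (b : nat -> algC) := forall g : algC, 1 < g ->
  exists K, forall k, `|b k| <= K * g ^+ k.
Definition decays (b : nat -> algC) := exists C rho : algC,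
  [/\ 0 <= C, 0 <= rho, rho < 1 & forall k, `|b k| <= C * rho ^+ k].

Lemma subexp_step b beta : subexp b -> subexp (fun k => b k.+1 - beta * b k).
Proof.
move=> sb g g1; have [K HK] := sb g g1.
exists (K * g + `|beta| * K) => k.
apply: le_trans (ler_normB _ _) _.
rewrite normrM mulrDl.
apply: lerD; first by rewrite -mulrA -exprS; apply: HK.
by rewrite -mulrA; apply: ler_wpM2l => //; apply HK.
Qed.

Lemma powle (x y : algC) k : 0 <= x -> x <= y -> x ^+ k <= y ^+ k.
Proof. by move=> x0 xy; apply: lerXn2r => //; rewrite nnegrE // (le_trans x0 xy). Qed.

Lemma decay_lt1 b beta : `|beta| < 1 ->
  decays (fun k => b k.+1 - beta * b k) -> decays b.
Proof.
move=> t1 [C [rho [C0 r0 r1 HC]]].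
set t := `|beta| in t1.
have t0 : 0 <= t by apply: normr_ge0.
set s := 1 - (1 - t) * (1 - rho) / 2.
have st : 0 < s - t.
  have -> : s - t = (1 - t) * (1 + rho) / 2 by rewrite /s; field.
  have r10 : 0 < 1 + rho by apply: (lt_le_trans ltr01); rewrite lerDl.
  by rewrite divr_gt0 // mulr_gt0 // subr_gt0.
have sr : 0 <= s - rho.
  have -> : s - rho = (1 - rho) * (1 + t) / 2 by rewrite /s; field.
  by rewrite divr_ge0 // mulr_ge0 // ?subr_ge0 ?ltW //; apply: (lt_le_trans ltr01); rewrite lerDl.
have s1 : s < 1.
  rewrite -subr_gt0.
  have -> : 1 - s = (1 - t) * (1 - rho) / 2 by rewrite /s; ring.
  by rewrite divr_gt0 // mulr_gt0 // subr_gt0.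
have s0 : 0 <= s.
  by rewrite -(subrK t s) addr_ge0 // ltW.
set D := `|b 0| + C / (s - t).
have D0 : 0 <= D by rewrite addr_ge0 // divr_ge0 // ltW.
exists D, s; split => // k.
elim: k => [|k IH].
  by rewrite expr0 mulr1 lerDl divr_ge0 // ltW.
have -> : b k.+1 = (b k.+1 - beta * b k) + beta * b k by ring.
apply: le_trans (ler_normD _ _) _.
apply: le_trans (_ : C * s ^+ k + t * (D * s ^+ k) <= _).
  apply: lerD.
    apply: le_trans (HC k) _; apply: ler_wpM2l => //; apply: powle => //.
    by rewrite -subr_ge0.
  by rewrite normrM; apply: ler_wpM2l.
rewrite -subr_ge0.
have -> : D * s ^+ k.+1 - (C * s ^+ k + t * (D * s ^+ k)) =
   s ^+ k * (D * (s - t) - C) by rewrite exprS; ring.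
apply: mulr_ge0; first exact: exprn_ge0.
have -> : D * (s - t) - C = `|b 0| * (s - t).
  by rewrite /D mulrDl divfK ?gt_eqF //; ring.
by rewrite mulr_ge0 // ltW.
Qed.


Lemma decay_gt1 b beta : subexp b -> 1 < `|beta| ->
  decays (fun k => b k.+1 - beta * b k) -> decays b.
Proof.
move=> sb t1 [C [rho [C0 r0 r1 HC]]].
set t := `|beta| in t1.
have t0 : 0 <= t by apply: normr_ge0.
set tau := (1 + t) / 2.
have tt : 0 < t - tau.
  have -> : t - tau = (t - 1) / 2 by rewrite /tau; field.
  by rewrite divr_gt0 // subr_gt0.
have tau1 : 1 < tau.
  rewrite -subr_gt0.
  have -> : tau - 1 = (t - 1) / 2 by rewrite /tau; field.
  by rewrite divr_gt0 // subr_gt0.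
have tau0 : 0 < tau by apply: lt_trans tau1; rewrite ltr01.
set D := C / (t - tau).
have D0 : 0 <= D by rewrite divr_ge0 // ltW.
exists D, rho; split => // k.
have Rb : `|b k| \is Num.real by apply: normr_real.
have RD : D * rho ^+ k \is Num.real by apply: ger0_real; rewrite mulr_ge0 // exprn_ge0.
rewrite real_leNgt //; apply/negP => Hk.
have step : forall j, D * rho ^+ j < `|b j| ->
    tau * `|b j| < `|b j.+1| /\ D * rho ^+ j.+1 < `|b j.+1|.
  move=> j Hj.
  have bj0 : 0 < `|b j| by apply: le_lt_trans Hj; rewrite mulr_ge0 // exprn_ge0.
  have H1 : t * `|b j| <= `|b j.+1| + C * rho ^+ j.
    apply: le_trans (_ : `|b j.+1| + `|b j.+1 - beta * b j| <= _); last first.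
      by rewrite lerD2l; apply: HC.
    rewrite /t -normrM.
    have := ler_normB (b j.+1) (b j.+1 - beta * b j).
    by have -> : b j.+1 - (b j.+1 - beta * b j) = beta * b j by ring.
  have H2 : C * rho ^+ j < (t - tau) * `|b j|.
    have -> : C * rho ^+ j = (t - tau) * (D * rho ^+ j).
      by rewrite /D mulrA [(t - tau) * _]mulrC divfK ?gt_eqF.
    by rewrite ltr_pM2l.
  have H3 : tau * `|b j| < `|b j.+1|.
    rewrite -(ltrD2r (C * rho ^+ j)).
    apply: lt_le_trans H1.
    rewrite -subr_gt0.
    have -> : t * `|b j| - (tau * `|b j| + C * rho ^+ j) =
        (t - tau) * `|b j| - C * rho ^+ j by ring.
    by rewrite subr_gt0.
  split => //.
  apply: le_lt_trans H3.
  apply: le_trans (_ : D * rho ^+ j <= _).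
    by rewrite exprS mulrCA ler_piMl ?mulr_ge0 ?exprn_ge0 ?invr_ge0 // ltW.
  apply: le_trans (ltW Hj) _.
  by rewrite ler_peMl // ltW.
have grow_all : forall m, tau ^+ m * `|b k| <= `|b (k + m)%N| /\
    D * rho ^+ (k + m)%N < `|b (k + m)%N|.
  elim => [|m [IH1 IH2]]; first by rewrite expr0 mul1r addn0.
  have [S1 S2] := step _ IH2.
  rewrite addnS; split => //.
  apply: le_trans (ltW S1).
  by rewrite exprS -mulrA; apply: ler_wpM2l; [exact: ltW|].
set g := (1 + tau) / 2.
have g1 : 1 < g.
  rewrite -subr_gt0.
  have -> : g - 1 = (tau - 1) / 2 by rewrite /g; field.
  by rewrite divr_gt0 // subr_gt0.
have g0 : 0 < g by apply: lt_trans g1; rewrite ltr01.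
have gt : 0 < tau / g - 1.
  rewrite subr_gt0 ltr_pdivlMr // mul1r -subr_gt0.
  have -> : tau - g = (tau - 1) / 2 by rewrite /g; field.
  by rewrite divr_gt0 // subr_gt0.
have [K HK] := sb g g1.
have K0 : 0 <= K.
  by have := HK 0%N; rewrite expr0 mulr1; apply: le_trans.
have bk0 : 0 < `|b k| by apply: le_lt_trans Hk; rewrite mulr_ge0 // exprn_ge0.
have [m Hm] : exists m, K * g ^+ k < `|b k| * (tau / g) ^+ m.
  apply: grow => //; first by rewrite -subr_gt0.
  by rewrite mulr_ge0 // exprn_ge0 // ltW.
have [G1 _] := grow_all m.
have gm0 : 0 < g ^+ m by rewrite exprn_gt0.
have H1 : tau ^+ m * `|b k| <= K * g ^+ k * g ^+ m.
  by rewrite -mulrA -exprD; apply: le_trans G1 (HK _).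
have H2 : K * g ^+ k * g ^+ m < `|b k| * tau ^+ m.
  have -> : `|b k| * tau ^+ m = `|b k| * (tau / g) ^+ m * g ^+ m.
    by rewrite -[RHS]mulrA -exprMn divfK // gt_eqF.
  by rewrite ltr_pM2r.
by have := le_lt_trans H1 H2; rewrite mulrC ltxx.
Qed.


Definition papp (Q : {poly algC}) (b : nat -> algC) k :=
  \sum_(i < size Q) Q`_i * b (k + i)%N.

Lemma papp_big (Q : {poly algC}) b k n : (size Q <= n)%N ->
  papp Q b k = \sum_(i < n) Q`_i * b (k + i)%N.
Proof.
move=> H; rewrite /papp -(subnKC H) big_split_ord /=.
rewrite [X in _ = _ + X]big1 ?addr0 // => i _.
by rewrite nth_default ?mul0r // leq_addr.
Qed.

Lemma papp_mul (Q : {poly algC}) beta b k : papp (Q * ('X - beta%:P)) b k =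
  papp Q (fun j => b j.+1 - beta * b j) k.
Proof.
have Hs : (size (Q * ('X - beta%:P))%R <= (size Q).+1)%N.
  apply: (leq_trans (size_polyMleq _ _)).
  by rewrite size_XsubC addn2.
rewrite (papp_big _ _ Hs) (papp_big _ _ (leqnSn (size Q))).
rewrite mulrBr.
under eq_bigr do rewrite coefB coefMC mulrBl.
under [in RHS]eq_bigr do rewrite mulrBr.
rewrite !sumrB; congr (_ - _); last first.
  by apply: eq_bigr => i _; rewrite mulrA.
rewrite big_ord_recl coefMX /= mul0r add0r big_ord_recr /=.
rewrite [Q`_(size Q)]nth_default // mul0r addr0.
apply: eq_bigr => i _; rewrite coefMX /= addnS.
by [].
Qed.

Lemma decays_ext b1 b2 : (forall k, b1 k = b2 k) -> decays b1 -> decays b2.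
Proof.
move=> E [C [r [C0 r0 r1 H]]]; exists C, r; split => // k; rewrite -E; exact: H.
Qed.

Lemma main_rec n : forall (Q : {poly algC}) b, (size Q <= n)%N -> Q != 0 ->
  (forall z : algC, `|z| = 1 -> ~~ root Q z) -> subexp b -> decays (papp Q b) ->
  decays b.
Proof.
elim: n => [|n IH] Q b Hs Q0 Hr sb dQ.
  by move: Hs; rewrite leqn0 size_poly_eq0 (negbTE Q0).
have [/eqP s1|s1] := boolP (size Q == 1%N).
  have EQ := size1_polyC (eq_leq s1).
  set c := Q`_0 in EQ.
  have c0 : c != 0 by apply: contraNneq Q0 => c0; rewrite EQ c0.
  have nc0 : 0 < `|c| by rewrite normr_gt0.
  move: dQ => [C [r [C0 r0 r1 H]]].
  exists (C / `|c|), r; split => //; first by rewrite divr_ge0 // ltW.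
  move=> k; have := H k.
  rewrite /papp s1 big_ord1 addn0 normrM -/c => Hk.
  by rewrite mulrAC ler_pdivlMr // mulrC.
have [beta rb] := closed_rootP Q s1.
move: (rb) => /factor_theorem [q' Eq'].
have q0 : q' != 0 by apply: contraNneq Q0 => q0; rewrite Eq' q0 mul0r.
have sq : (size q' <= n)%N.
  move: Hs; rewrite Eq' size_mul ?polyXsubC_eq0 // size_XsubC addn2 /=.
  by [].
have nb1 : `|beta| != 1 by apply/eqP => /Hr; rewrite rb.
have db : decays (fun k => b k.+1 - beta * b k).
  apply: (IH q') => //.
  - move=> z /Hr; rewrite Eq' rootM negb_or => /andP[] //.
  - exact: subexp_step.
  - by apply: (decays_ext _ dQ) => k; rewrite Eq' papp_mul.
have : (`|beta| < 1) || (1 < `|beta|) by rewrite -real_neqr_lt ?normr_real ?real1.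
case/orP => H.
  exact: decay_lt1 H db.
exact: decay_gt1 sb H db.
Qed.

Lemma int_zero (Q : {poly algC}) (a : nat -> int) : Q != 0 ->
  (forall z : algC, `|z| = 1 -> ~~ root Q z) ->
  subexp (fun k => (a k)%:~R) ->
  (forall k, papp Q (fun k => (a k)%:~R) k = 0) ->
  exists N, forall k, (N <= k)%N -> a k = 0.
Proof.
move=> Q0 Hr sa H0.
have [] := @main_rec (size Q) Q _ (leqnn _) Q0 Hr sa.
  by exists 0, 0; split => // k; rewrite H0 normr0 mul0r.
move=> C [r [C0 r0 r1 H]].
have [N HN] : exists N, C * r ^+ N < 1.
  have [r00|rpos] := eqVneq r 0.
    by exists 1%N; rewrite r00 expr1 mulr0 ltr01.
  have rp : 0 < r by rewrite lt_def rpos.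
  have [m Hm] : exists m, C < 1 * (r^-1) ^+ m.
    apply: grow => //; first by rewrite invf_gt1.
  exists m; rewrite mul1r exprVn in Hm.
  by rewrite -ltr_pdivlMr ?exprn_gt0 // div1r.
exists N => k Nk.
have : `|(a k)%:~R : algC| < 1.
  apply: le_lt_trans (H k) _; apply: le_lt_trans HN.
  apply: ler_wpM2l => //; apply: ler_wiXn2l => //; exact: ltW.
rewrite -intr_norm -[1]/((1%:Z)%:~R) ltr_int => h; lia.
Qed.



Definition HQ (c : series) := forall e : rat, 0 < e ->
  exists K : rat, forall m : int, (`|c m|)%:~R <= K * (1 + e) ^+ `|m|%N.

Lemma term_le_sum (F : nat -> rat) N i : (forall j, 0 <= F j) -> (i < N)%N ->
  F i <= \sum_(j < N) F j.
Proof.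
move=> F0; elim: N => [//|N IH] Hi.
rewrite big_ord_recr /=.
have [iN|iN] := ltnP i N.
  by apply: le_trans (IH iN) _; rewrite lerDl.
have -> : i = N by apply/eqP; rewrite eqn_leq iN -ltnS Hi.
by rewrite lerDr sumr_ge0.
Qed.

Lemma ac_HQ c : almost_convergent c -> HQ c.
Proof.
move=> [Hp Hn] e e0.
have [N1 H1] := Hp e e0; have [N2 H2] := Hn e e0.
set N := (N1 + N2)%N.
set S := \sum_(j < N) ((`|c j%:Z|)%:~R + (`|c (- j%:Z)|)%:~R : rat).
have S0 : 0 <= S by apply: sumr_ge0 => j _; rewrite addr_ge0 // ler0z.
exists (1 + S) => m.
have e1 : 1 <= (1 + e) ^+ `|m|%N by rewrite exprn_ege1 // lerDl ltW.
have pe0 : 0 <= (1 + e) ^+ `|m|%N by apply: le_trans e1; rewrite ler01.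
have [mN|mN] := ltnP `|m|%N N.
  apply: le_trans (_ : 1 + S <= _); last by rewrite ler_peMr // addr_ge0.
  apply: le_trans (_ : S <= _); last by rewrite lerDr.
  have := @term_le_sum (fun j => ((`|c j%:Z|)%:~R + (`|c (- j%:Z)|)%:~R : rat))
     N `|m|%N ltac:(by move=> j; rewrite addr_ge0 // ler0z) mN.
  apply: le_trans.
  case: m {e1 pe0 mN} => n; rewrite ?NegzE /=.
    by rewrite lerDl ler0z.
  by rewrite lerDr ler0z.
apply: le_trans (_ : (1 + e) ^+ `|m|%N <= _); last first.
  by rewrite ler_peMl // lerDl.
case: m mN {e1 pe0} => n; rewrite ?NegzE /= => mN.
  by apply: H1; apply: leq_trans mN; rewrite leq_addr.
by apply: H2; apply: leq_trans mN; rewrite leq_addl.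
Qed.

Lemma bernQ (h : rat) m : 0 <= h -> 1 + h *+ m <= (1 + h) ^+ m.
Proof.
move=> h0; elim: m => [|m IH]; first by rewrite mulr0n addr0 expr0.
rewrite exprS.
apply: le_trans (_ : (1 + h) * (1 + h *+ m) <= _); last first.
  by rewrite ler_wpM2l // addr_ge0.
rewrite -subr_ge0.
have -> : (1 + h) * (1 + h *+ m) - (1 + h *+ m.+1) = h * (h *+ m) by rewrite mulrSr; ring.
by rewrite mulr_ge0 // mulrn_wge0.
Qed.

Lemma HQ_ev c : HQ c -> forall e : rat, 0 < e -> exists N : nat,
  forall m : int, (N <= `|m|)%N -> (`|c m|)%:~R <= (1 + e) ^+ `|m|%N.
Proof.
move=> H e e0.
set e' := e / (e + 3).
have e'0 : 0 < e' by rewrite divr_gt0 // addr_gt0.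
have e'2 : (1 + e') ^+ 2 <= 1 + e.
  have e'1 : e' < 1 by rewrite ltr_pdivrMr ?addr_gt0 // mul1r ltrDl.
  have : e' * (e + 3) = e by rewrite divfK // gt_eqF // addr_gt0.
  nra.
have [K HK] := H e' e'0.
have K0 : 0 <= K by have := HK 0; rewrite expr0 mulr1; apply: le_trans; rewrite ler0z.
have y0 : 0 <= K / e' by rewrite divr_ge0 // ltW.
have /andP[_ HN] := Num.Theory.truncn_itv y0.
exists (Num.truncn (K / e')).+1 => m Hm.
apply: le_trans (HK m) _.
apply: le_trans (_ : (1 + e') ^+ `|m|%N * (1 + e') ^+ `|m|%N <= _).
  apply: ler_wpM2r; first by rewrite exprn_ge0 // addr_ge0 // ltW.
  apply: le_trans (_ : 1 + e' *+ `|m|%N <= _); last by apply: bernQ; exact: ltW.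
  apply: le_trans (_ : e' *+ `|m|%N <= _); last by rewrite lerDr.
  rewrite ltr_pdivrMr // in HN.
  apply: le_trans (ltW HN) _.
  by rewrite -[e' *+ _]mulr_natl ler_pM2r // ler_nat.
rewrite -expr2 -exprM mulnC exprM.
apply: lerXn2r => //; rewrite nnegrE ?exprn_ge0 // ?addr_ge0 // ltW //.
Qed.

Lemma HQ_ac c : HQ c -> almost_convergent c.
Proof.
move=> H; split => e e0; have [N HN] := HQ_ev H e0; exists N => n Hn.
  by have := HN n%:Z Hn.
by have := HN (- n%:Z); rewrite abszN; apply.
Qed.

Lemma HQ_K0 (c : series) (e K : rat) : (forall m : int, (`|c m|)%:~R <= K * (1 + e) ^+ `|m|%N) -> 0 <= K :> rat.
Proof. by move=> HK; have := HK 0; rewrite expr0 mulr1; apply: le_trans; rewrite ler0z. Qed.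

Lemma HQ_lmul f c : HQ c -> HQ (lmul f c).
Proof.
move=> H e e0; have [K HK] := H e e0; have K0 := HQ_K0 HK.
have e1 : 1 <= 1 + e by rewrite lerDl ltW.
have pe0 : forall n, 0 <= (1 + e) ^+ n by move=> n; rewrite exprn_ge0 // (le_trans ler01 e1).
exists (\sum_(i < size (lp f)) (`|(lp f)`_i|)%:~R * (K * (1 + e) ^+ (`|lsh f|%N + i)%N)) => m.
rewrite mulr_suml /lmul intr_norm rmorph_sum /=.
apply: le_trans (ler_norm_sum _ _ _) _.
apply: ler_sum => i _.
rewrite rmorphM /= normrM -!intr_norm -mulrA.
apply: ler_wpM2l; first by rewrite ler0z.
apply: le_trans (HK _) _.
rewrite -mulrA; apply: ler_wpM2l => //.
rewrite -exprD; apply: ler_weXn2l => //.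

lia.
Qed.


Lemma HQ_subexp (c : series) (j0 : int) : HQ c ->
  subexp (fun k => ((c (j0 - k%:Z))%:~R : algC)).
Proof.
move=> H g g1.
have g10 : 0 < g - 1 by rewrite subr_gt0.
have y0 : 0 <= (g - 1)^-1 by rewrite invr_ge0 ltW.
have /andP[_ HN] := Num.Theory.truncn_itv y0.
set n := Num.truncn _ in HN.
set e : rat := (n.+1%:R)^-1.
have e0 : 0 < e by rewrite invr_gt0 ltr0n.
have [K HK] := H e e0; have K0 := HQ_K0 HK.
have ge : ratr (1 + e) <= g.
  rewrite rmorphD rmorph1 /= fmorphV /= ratr_nat -(subrK 1 g) addrC lerD2r.
  rewrite -div1r ler_pdivrMr ?ltr0n //.
  by rewrite -div1r ltr_pdivrMr // mulrC in HN; apply: ltW.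
have r0 : 0 <= ratr (1 + e) :> algC.
  by rewrite ler0q addr_ge0 // ltW.
exists (ratr (K * (1 + e) ^+ `|j0|%N)) => k.
apply: le_trans (_ : ratr (K * (1 + e) ^+ `|j0|%N * (1 + e) ^+ k) <= _).
  rewrite -intr_norm -ratr_int ler_rat.
  apply: le_trans (HK _) _.
  rewrite -mulrA -exprD; apply: ler_wpM2l => //; apply: ler_weXn2l.
    by rewrite lerDl ltW.
  lia.
rewrite rmorphM /= rmorphXn /=.
apply: ler_wpM2l.
  by rewrite ler0q mulr_ge0 // exprn_ge0 // addr_ge0 // ltW.
exact: powle.
Qed.


Unset Implicit Arguments.
Theorem mainTheorem2 (f : laurent) (hf : hyperbolic f) (d : series) :
  ((exists c : series, almost_convergent c /\ forall n, d n = lmul f c n)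
     /\ Zac_half d)
  <-> (exists c : series, Zac_half c /\ forall n, d n = lmul f c n).
Proof.
split.
- move=> [[c [ac Hd]] [acd [m Hm]]].
  exists c; split => //; split => //.
  set p := lp f; set s := lsh f.
  set Q : {poly algC} := map_poly intr p.
  have sQ : size Q = size p by apply: size_map_inj_poly; [exact: intr_inj | exact: mulr0z].
  have Q0 : Q != 0.
    apply/eqP => Q0; have := hf 1 (normr1 _).
    by rewrite /leval -/p -/Q Q0 horner0 mulr0 eqxx.
  have Hr : forall z : algC, `|z| = 1 -> ~~ root Q z.
    move=> z hz; have := hf z hz.
    by rewrite /leval mulf_eq0 negb_or => /andP[_].
  set j0 := m - s - 1.
  have sa := HQ_subexp j0 (ac_HQ ac).
  have Hp : forall k, papp Q (fun k => ((c (j0 - k%:Z))%:~R : algC)) k = 0.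
    move=> k; rewrite /papp sQ.
    have : d (j0 - k%:Z + s) = 0 by apply: Hm; rewrite /j0; lia.
    rewrite Hd /lmul -/p -/s => E.
    have E2 := congr1 (intr : int -> algC) E; rewrite rmorph_sum rmorph0 /= in E2.
    rewrite -[RHS]E2.
    apply: eq_bigr => i _; rewrite coef_map /= rmorphM /=.
    by congr (_ * (c _)%:~R); lia.
  have [N HN] := @int_zero Q (fun k => c (j0 - k%:Z)) Q0 Hr sa Hp.
  exists (j0 - N%:Z + 1) => n Hn.
  have E : ((absz (j0 - n))%:Z = j0 - n) by apply: gez0_abs; lia.
  have := HN (absz (j0 - n)) ltac:(lia).
  by rewrite E; have -> : j0 - (j0 - n) = n by ring.
- move=> [c [[ac [m Hm]] Hd]]; split.
    by exists c; split.
  split.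
    apply: HQ_ac => e e0; have [K HK] := HQ_lmul f (ac_HQ ac) e0.
    by exists K => n; rewrite Hd.
  exists (m + lsh f) => n Hn.
  rewrite Hd /lmul big1 // => i _; rewrite Hm ?mulr0 //; lia.
Qed.
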